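(* Let $m$ be a positive integer, $S\subseteq\mathbb{F}_2^m$ and $\epsilon\in(0,1/2)$, and let $d=\dim(S)$. Then $\langle\mathcal{X}_{\overline{S}}^4\rangle\le 2^{2dm+8d^2}\big(1/(\epsilon(1-\epsilon))\big)^{2^d}$.
   Context: For $g:\{0,1\}^{\mathbb{F}_2^m}\to\mathbb{R}$, $\langle g\rangle=\sum_{z}\epsilon^{|z|}(1-\epsilon)^{2^m-|z|}g(z)$, the expectation under the product Bernoulli$(\epsilon)$ measure ($|z|$ is the Hamming weight). For $S\subseteq\mathbb{F}_2^m$, $\mathcal{X}_S(z)=\left(\frac{\epsilon}{1-\epsilon}\right)^{|S|/2}\left(-\frac{1-\epsilon}{\epsilon}\right)^{|\{x\in S:z_x=1\}|}$. $\dim(S)$ is the dimension of the linear span of $S$ in $\mathbb{F}_2^m$. $\overline{S}$ is the set of distinct images $\pi(S)$ of $S$ under invertible linear maps $\pi$ of $\mathbb{F}_2^m$, and $\mathcal{X}_{\overline{S}}=\sum_{S'\in\overline{S}}\mathcal{X}_{S'}$. *)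

(* Defs.v *)
From HB Require Import structures.
From mathcomp Require Import all_boot all_order all_algebra all_fingroup.
Set Implicit Arguments. Unset Strict Implicit. Unset Printing Implicit Defensive.
Import Order.TTheory GRing.Theory Num.Theory.
Local Open Scope ring_scope.

(* F_2^m is the row space 'rV['F_2]_m; a configuration z : {0,1}^{F_2^m}
   is a boolean finite function on it. *)
Notation vec m := ('rV['F_2]_m).
Notation config m := {ffun vec m -> bool}.

Definition hweight (m : nat) (z : config m) : nat := #|[set x | z x]|.

Definition bexp (R : rcfType) (m : nat) (eps : R) (g : config m -> R) : R :=
  \sum_(z : config m)
     eps ^+ hweight z * (1 - eps) ^+ (2 ^ m - hweight z)%N * g z.

Definition chiS (R : rcfType) (m : nat) (eps : R) (S : {set vec m})
    (z : config m) : R :=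
  Num.sqrt (eps / (1 - eps)) ^+ #|S|
  * (- ((1 - eps) / eps)) ^+ #|[set x in S | z x]|.

Definition dimS (m : nat) (S : {set vec m}) : nat := (\dim <<enum S>>)%VS.

Definition orbitS (m : nat) (S : {set vec m}) : {set {set vec m}} :=
  [set [set x *m A | x in S] | A in [set A : 'M['F_2]_m | A \in unitmx]].

Definition chiSbar (R : rcfType) (m : nat) (eps : R) (S : {set vec m})
    (z : config m) : R :=
  \sum_(S' in orbitS S) chiS eps S' z.

(* Main.v *)
Require Import Defs.
From HB Require Import structures.
From mathcomp Require Import all_boot all_order all_algebra all_fingroup all_field.
From mathcomp Require Import ring lra zify.
Import Order.TTheory GRing.Theory Num.Theory.
Local Open Scope ring_scope.
Set Implicit Arguments. Unset Strict Implicit. Unset Printing Implicit Defensive.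

Section Term.
Variables (R : rcfType) (m : nat) (eps : R).
Hypothesis eps0 : 0 < eps.
Hypothesis eps1 : eps < 1.

Let qq := Num.sqrt (eps / (1 - eps)).
Let rr := (1 - eps) / eps.

Lemma card_vec : #|{: vec m}| = (2 ^ m)%N.
Proof. by rewrite card_mx card_Fp // mul1n. Qed.

Lemma chiS_prod (S : {set vec m}) (z : config m) :
  chiS eps S z = \prod_x ((if x \in S then qq else 1) *
                          (if (x \in S) && z x then - rr else 1)).
Proof.
rewrite big_split /= /chiS -!prodr_const.
congr (_ * _); rewrite big_mkcond /=.
  by [].
by apply: eq_bigr => x _; rewrite inE.
Qed.

Lemma weight_prod (z : config m) :
  eps ^+ hweight z * (1 - eps) ^+ (2 ^ m - hweight z)%N
  = \prod_x (if z x then eps else 1 - eps).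
Proof.
rewrite [RHS](bigID (fun x => z x)) /=.
rewrite [X in _ = X * _](eq_bigr (fun _ => eps)); last by move=> x ->.
rewrite [X in _ = _ * X](eq_bigr (fun _ => 1 - eps)); last by move=> x /negbTE ->.
rewrite !prodr_const /hweight; congr (_ * _ ^+ _).
  by congr (_ ^+ _); apply: eq_card => x; rewrite inE.
rewrite -card_vec -(cardC [set x | z x]) addKn.
by apply: eq_card => x; rewrite !inE.

Qed.

Definition cnt (S1 S2 S3 S4 : {set vec m}) x : nat :=
  ((x \in S1) + (x \in S2) + (x \in S3) + (x \in S4))%N.
Definition hh (c : nat) : R := (1 - eps) + eps * (- rr) ^+ c.

Lemma term_eq (S1 S2 S3 S4 : {set vec m}) :
  bexp eps (fun z => chiS eps S1 z * chiS eps S2 z * chiS eps S3 z * chiS eps S4 z)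
  = \prod_x (qq ^+ cnt S1 S2 S3 S4 x * hh (cnt S1 S2 S3 S4 x)).
Proof.
rewrite /bexp.
pose F (S : {set vec m}) x (b : bool) :=
  (if x \in S then qq else 1) * (if (x \in S) && b then - rr else 1).
transitivity (\sum_(z : config m) \prod_x ((if z x then eps else 1 - eps) *
   (F S1 x (z x) * F S2 x (z x) * F S3 x (z x) * F S4 x (z x)))).
  by apply: eq_bigr => z _; rewrite weight_prod !chiS_prod -!big_split.
rewrite -(bigA_distr_bigA (fun x (b : bool) => (if b then eps else 1 - eps) *
   (F S1 x b * F S2 x b * F S3 x b * F S4 x b))) /=; apply: eq_bigr => x _; rewrite big_bool /= /cnt /hh.
rewrite /F; case: (x \in S1); case: (x \in S2); case: (x \in S3); case: (x \in S4); rewrite /= ?exprD ?expr1 ?expr0; ring.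
Qed.

Let KK := 1 / (eps * (1 - eps)).

Lemma KK_ge1 : 1 <= KK.
Proof.
have p0 : 0 < eps * (1 - eps) by rewrite mulr_gt0 // subr_gt0.
have HK : KK * (eps * (1 - eps)) = 1 by rewrite /KK mul1r mulVf // gt_eqF.
have p1 : eps * (1 - eps) <= 1 by nra.
nra.
Qed.

Lemma qq2 : qq ^+ 2 = eps / (1 - eps).
Proof. by rewrite sqr_sqrtr // divr_ge0 // ?subr_ge0 ltW. Qed.

Lemma hh1 : hh 1 = 0.
Proof.
rewrite /hh /rr expr1; have e0 : eps != 0 by rewrite gt_eqF.
by field.
Qed.

Lemma site_bound c : (c <= 4)%N -> c != 1%N ->
  (qq ^+ c * hh c) ^+ 4 <= KK ^+ c.
Proof.
have e0 : eps != 0 by rewrite gt_eqF.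
have e1 : 1 - eps != 0 by rewrite gt_eqF // subr_gt0.
have K1 := KK_ge1.
have hp : 0 < eps * (1 - eps) by rewrite mulr_gt0 // subr_gt0.
case: c => [|[|[|[|[|c]]]]] // _ _.
- by rewrite /hh expr0 mul1r mulr1 subrK expr1n expr0.
- have -> : (qq ^+ 2 * hh 2) ^+ 4 = 1.
    rewrite qq2 /hh /rr.
    have -> : eps / (1 - eps) * (1 - eps + eps * (- ((1 - eps) / eps)) ^+ 2) = 1 by field; rewrite e0 e1.
    by rewrite expr1n.
  by rewrite -(expr1n _ 2) lerXn2r // ?nnegrE ?ler01 // (le_trans ler01).
- have -> : (qq ^+ 3 * hh 3) ^+ 4 = (KK * (1 - 2 * eps) ^+ 2) ^+ 2.
    have -> : (qq ^+ 3 * hh 3) ^+ 4 = ((qq ^+ 2) ^+ 3 * hh 3 ^+ 2) ^+ 2 by ring.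
    rewrite qq2 /hh /rr /KK; congr (_ ^+ 2); field; by rewrite ?e0 ?e1 ?mulf_neq0.
  have t0 : 0 <= (1 - 2 * eps) ^+ 2 by rewrite sqr_ge0.
  have t1 : (1 - 2 * eps) ^+ 2 <= 1 by lra.
  have K0 : 0 <= KK by apply: le_trans K1.
  apply: (@le_trans _ _ (KK ^+ 2)); last exact: ler_weXn2l.
  rewrite exprMn -[leRHS]mulr1 ler_wpM2l ?exprn_ge0 //.
  exact: exprn_ile1.
- have -> : (qq ^+ 4 * hh 4) ^+ 4 = (KK * (eps ^+ 3 + (1 - eps) ^+ 3)) ^+ 4.
    have -> : (qq ^+ 4 * hh 4) = (qq ^+ 2) ^+ 2 * hh 4 by ring.
    rewrite qq2 /hh /rr /KK; congr (_ ^+ 4); field; by rewrite ?e0 ?e1 ?mulf_neq0.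
  have t0 : 0 <= eps ^+ 3 + (1 - eps) ^+ 3.
    by rewrite addr_ge0 // exprn_ge0 // ?subr_ge0 ltW.
  have t1 : eps ^+ 3 + (1 - eps) ^+ 3 <= 1 by lra.
  have K0 : 0 <= KK by apply: le_trans K1.
  apply: lerXn2r; rewrite ?nnegrE ?mulr_ge0 //.
  - by rewrite invr_ge0 ltW.
  - by rewrite invr_ge0 ltW.
  exact: ler_piMr.
Qed.

Definition valid (S1 S2 S3 S4 : {set vec m}) : bool :=
  [forall x, cnt S1 S2 S3 S4 x != 1%N].

Lemma sum_mem (A : {set vec m}) : (\sum_x ((x \in A) : nat))%N = #|A|.
Proof.
rewrite -sum1_card [RHS]big_mkcond /=.
by apply: eq_bigr => x _; case: (x \in A).
Qed.

Lemma sum_cnt (S1 S2 S3 S4 : {set vec m}) :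
  (\sum_x cnt S1 S2 S3 S4 x)%N = (#|S1| + #|S2| + #|S3| + #|S4|)%N.
Proof. by rewrite /cnt !big_split /= !sum_mem. Qed.

Lemma term_bound (S1 S2 S3 S4 : {set vec m}) D :
  (#|S1| + #|S2| + #|S3| + #|S4| <= 4 * D)%N ->
  bexp eps (fun z => chiS eps S1 z * chiS eps S2 z * chiS eps S3 z * chiS eps S4 z)
  <= (valid S1 S2 S3 S4)%:R * KK ^+ D.
Proof.
move=> hS; rewrite term_eq.
have K0 : 0 <= KK by apply: le_trans KK_ge1.
have KD : 0 <= KK ^+ D by rewrite exprn_ge0.
case hv: (valid S1 S2 S3 S4); last first.
  move/negbT: hv; rewrite negb_forall => /existsP [x]; rewrite negbK => /eqP hx.
  rewrite (bigD1 x) //= hx hh1 mulr0 mul0r mul0r.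
  by [].
rewrite mul1r.
set T := \prod_x _.
have [T0|T0] := leP T 0; first exact: le_trans KD.
rewrite -(ler_pXn2r (n := 4)) ?nnegrE ?(ltW T0) //.
rewrite /T -prodrXl.
apply: (@le_trans _ _ (\prod_x KK ^+ cnt S1 S2 S3 S4 x)).
  apply: ler_prod => x _; rewrite exprn_even_ge0 //=.
  apply: site_bound.
    rewrite /cnt; by case: (x \in S1); case: (x \in S2); case: (x \in S3); case: (x \in S4).
  by move/forallP: hv.
rewrite prodrXr sum_cnt -exprM.
by apply: ler_weXn2l; [exact: KK_ge1 | rewrite mulnC].
Qed.
End Term.
Section Comb.
Variables (m : nat) (S : {set vec m}).
Let d := dimS S.
Let b := vbasis <<enum S>>.

Definition Phi (g : {ffun 'I_(dimS S) -> vec m}) : {set vec m} :=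
  [set \sum_(j < dimS S) coord b j x *: g j | x in S].

Lemma span_img (A : 'M['F_2]_m) y : y \in <<enum S>>%VS ->
  y *m A \in <<enum [set x *m A | x in S]>>%VS.
Proof.
move=> Hy; have := @coord_span _ _ _ (in_tuple (enum S)) y Hy => ->.
rewrite mulmx_suml; apply: rpred_sum => i _; rewrite -scalemxAl; apply: rpredZ.
apply: memv_span; rewrite mem_enum; apply: imset_f.
by rewrite -mem_enum; apply: mem_nth.
Qed.

Lemma orbit_rep S' : S' \in orbitS S ->
  exists g, [/\ S' = Phi g, forall j, g j \in <<enum S'>>%VS & (#|S'| <= #|S|)%N].
Proof.
case/imsetP=> A _ ->.
exists [ffun j : 'I_(dimS S) => b`_j *m A]; split.
- apply: eq_in_imset => x Hx /=.
  have Hx' : x \in <<enum S>>%VS by apply: memv_span; rewrite mem_enum.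
  rewrite {1}(coord_vbasis Hx') mulmx_suml; apply: eq_bigr => j _.
  by rewrite ffunE scalemxAl.
- move=> j; rewrite ffunE; apply: span_img; apply: vbasis_mem.
  by apply: mem_nth; rewrite size_tuple.
- exact: leq_imset_card.
Qed.

Lemma Phi_sub g : {subset Phi g <= <<codom g>>%VS}.
Proof.
move=> y /imsetP [x _ ->]; apply: rpred_sum => j _; apply: rpredZ.
by apply: memv_span; apply: codom_f.
Qed.

Lemma orbit_dim S' : S' \in orbitS S -> (\dim <<enum S'>> <= dimS S)%N.
Proof.
case/orbit_rep=> g [-> _ _].
apply: (@leq_trans (\dim <<codom g>>)).
  apply: dimvS; apply/span_subvP => y; rewrite mem_enum; exact: Phi_sub.
by apply: leq_trans (dim_span _) _; rewrite size_codom card_ord.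
Qed.

Lemma card_S : (#|S| <= 2 ^ dimS S)%N.
Proof.
have := card_vspace <<enum S>>%VS; rewrite card_Fp // /dimS => <-.
apply: subset_leq_card; apply/subsetP => x Hx.
by apply: memv_span; rewrite mem_enum.
Qed.

Lemma count_W n (f : {ffun 'I_n -> vec m}) :
  (#|[set S' in orbitS S | (<<enum S'>> <= <<codom f>>)%VS]| <= 2 ^ (n * dimS S))%N.
Proof.
set W := <<codom f>>%VS.
apply: (@leq_trans #|[set Phi g | g in ffun_on W]|).
  apply: subset_leq_card; apply/subsetP => S' /[!inE] /andP [HO HW].
  case/orbit_rep: HO => g [eS Hg _]; rewrite eS in HW *; apply: imset_f.
  apply/ffun_onP => j; move/subvP: HW; apply; rewrite -eS; exact: Hg.
apply: leq_trans (leq_imset_card _ _) _.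
rewrite card_ffun_on card_vspace card_Fp // card_ord -expnM leq_exp2l //.
rewrite leq_mul2r; apply/orP; right; apply: leq_trans (dim_span _) _.
by rewrite size_codom card_ord.
Qed.
End Comb.

Section Span.
Variable m : nat.

Lemma half_dim (V1 V2 Wp : {vspace vec m}) (X1 X2 : seq (vec m)) :
  V1 = <<X1>>%VS -> V2 = <<X2>>%VS ->
  (forall x, x \in X1 -> (x \in V2) || (x \in Wp)) ->
  (forall x, x \in X2 -> (x \in V1) || (x \in Wp)) ->
  (\dim V1 + \dim V2 <= \dim ((V1 + V2) :&: Wp) + 2 * \dim (V1 :&: V2))%N.
Proof.
move=> e1 e2 c1 c2.
set P := (V1 :&: Wp)%VS; set Q := (V2 :&: Wp)%VS; set Z := (V1 :&: V2)%VS.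
have h1 : (V1 <= P + Z)%VS.
  rewrite {1}e1; apply/span_subvP => x Hx.
  have xV1 : x \in V1 by rewrite e1 memv_span.
  case/orP: (c1 x Hx) => H.
    by apply: (subvP (addvSr P Z)); rewrite memv_cap xV1 H.
  by apply: (subvP (addvSl P Z)); rewrite memv_cap xV1 H.
have h2 : (V2 <= Q + Z)%VS.
  rewrite {1}e2; apply/span_subvP => x Hx.
  have xV2 : x \in V2 by rewrite e2 memv_span.
  case/orP: (c2 x Hx) => H.
    by apply: (subvP (addvSr Q Z)); rewrite memv_cap xV2 H.
  by apply: (subvP (addvSl Q Z)); rewrite memv_cap xV2 H.
have h3 : (P + Q <= (V1 + V2) :&: Wp)%VS.
  rewrite subv_add !subv_cap !capvSr !andbT.
  apply/andP; split.
    exact: subv_trans (capvSl _ _) (addvSl _ _).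
  exact: subv_trans (capvSl _ _) (addvSr _ _).
have h4 : (P :&: Q <= P :&: Z)%VS.
  apply/subvP => x; rewrite !memv_cap => /andP [/andP [a1 a2] /andP [a3 a4]].
  by apply/and3P; split => //; apply/andP.
move/dimvS: h1; move/dimvS: h2; move/dimvS: h3; move/dimvS: h4.
have := dimv_sum_cap P Z; have := dimv_sum_cap Q Z; have := dimv_sum_cap P Q.
lia.
Qed.

Lemma cover_bool (a b c e : bool) : (a + b + c + e != 1)%N -> a -> [|| b, c | e].
Proof. by case: a; case: b; case: c; case: e. Qed.

Lemma span_claim (S1 S2 S3 S4 : {set vec m}) (d : nat) :
  (\dim <<enum S1>> <= d)%N -> (\dim <<enum S2>> <= d)%N ->
  (\dim <<enum S3>> <= d)%N -> (\dim <<enum S4>> <= d)%N ->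
  valid S1 S2 S3 S4 ->
  exists f : {ffun 'I_(2 * d) -> vec m},
    [/\ (<<enum S1>> <= <<codom f>>)%VS, (<<enum S2>> <= <<codom f>>)%VS,
        (<<enum S3>> <= <<codom f>>)%VS & (<<enum S4>> <= <<codom f>>)%VS].
Proof.
move=> d1 d2 d3 d4 /forallP hv.
set V1 := <<enum S1>>%VS; set V2 := <<enum S2>>%VS.
set V3 := <<enum S3>>%VS; set V4 := <<enum S4>>%VS.
set W := (V1 + V2)%VS; set W' := (V3 + V4)%VS.
have mV : forall (A : {set vec m}) x, x \in A -> x \in <<enum A>>%VS.
  by move=> A x Hx; apply: memv_span; rewrite mem_enum.
have mW1 : forall x, x \in V1 -> x \in W by move=> x; apply: (subvP (addvSl _ _)).
have mW2 : forall x, x \in V2 -> x \in W by move=> x; apply: (subvP (addvSr _ _)).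
have mW3 : forall x, x \in V3 -> x \in W' by move=> x; apply: (subvP (addvSl _ _)).
have mW4 : forall x, x \in V4 -> x \in W' by move=> x; apply: (subvP (addvSr _ _)).
have H12 := @half_dim V1 V2 W' (enum S1) (enum S2) erefl erefl.
have H34 := @half_dim V3 V4 W (enum S3) (enum S4) erefl erefl.
have hx := fun x => hv x; rewrite /cnt in hx.
have c1 : forall x, x \in S1 -> [|| x \in S2, x \in S3 | x \in S4].
  by move=> x; have := hx x; case: (x \in S1); case: (x \in S2); case: (x \in S3); case: (x \in S4).
have c2 : forall x, x \in S2 -> [|| x \in S1, x \in S3 | x \in S4].
  by move=> x; have := hx x; case: (x \in S1); case: (x \in S2); case: (x \in S3); case: (x \in S4).
have c3 : forall x, x \in S3 -> [|| x \in S4, x \in S1 | x \in S2].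
  by move=> x; have := hx x; case: (x \in S1); case: (x \in S2); case: (x \in S3); case: (x \in S4).
have c4 : forall x, x \in S4 -> [|| x \in S3, x \in S1 | x \in S2].
  by move=> x; have := hx x; case: (x \in S1); case: (x \in S2); case: (x \in S3); case: (x \in S4).
have {}H12 : (\dim V1 + \dim V2 <= \dim (W :&: W') + 2 * \dim (V1 :&: V2))%N.
  apply: H12 => x; rewrite mem_enum => Hx.
    case/or3P: (c1 x Hx) => H;
      [by rewrite mV | by rewrite mW3 ?orbT // mV | by rewrite mW4 ?orbT // mV].
  case/or3P: (c2 x Hx) => H;
    [by rewrite mV | by rewrite mW3 ?orbT // mV | by rewrite mW4 ?orbT // mV].
have {}H34 : (\dim V3 + \dim V4 <= \dim (W :&: W') + 2 * \dim (V3 :&: V4))%N.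
  rewrite capvC; apply: H34 => x; rewrite mem_enum => Hx.
    case/or3P: (c3 x Hx) => H;
      [by rewrite mV | by rewrite mW1 ?orbT // mV | by rewrite mW2 ?orbT // mV].
  case/or3P: (c4 x Hx) => H;
    [by rewrite mV | by rewrite mW1 ?orbT // mV | by rewrite mW2 ?orbT // mV].
have e12 := dimv_sum_cap V1 V2; have e34 := dimv_sum_cap V3 V4.
have eW := dimv_sum_cap W W'.
rewrite -/W in e12; rewrite -/W' in e34.
rewrite -/V1 in d1; rewrite -/V2 in d2; rewrite -/V3 in d3; rewrite -/V4 in d4.
have Hd : (\dim (W + W') <= 2 * d)%N by lia.
pose f := [ffun i : 'I_(2 * d) => (vbasis (W + W'))`_i].
exists f.
have Hsub : (W + W' <= <<codom f>>)%VS.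
  rewrite -{1}(span_basis (vbasisP (W + W'))); apply: sub_span => v /(nthP 0) [i Hi <-].
  have Hi' : (i < 2 * d)%N by apply: leq_trans Hi _; rewrite size_tuple.
  have -> : (vbasis (W + W'))`_i = f (Ordinal Hi') by rewrite ffunE.
  exact: codom_f.
have sW : (W <= <<codom f>>)%VS := subv_trans (addvSl _ _) Hsub.
have sW' : (W' <= <<codom f>>)%VS := subv_trans (addvSr _ _) Hsub.
split.
- exact: subv_trans (addvSl _ _) sW.
- exact: subv_trans (addvSr _ _) sW.
- exact: subv_trans (addvSl _ _) sW'.
- exact: subv_trans (addvSr _ _) sW'.
Qed.
End Span.

Lemma sum4 (T : finType) (A : pred T) (a : T -> nat) :
  (\sum_(i in A) \sum_(j in A) \sum_(k in A) \sum_(l in A) a i * a j * a k * a l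
   = (\sum_(i in A) a i) ^ 4)%N.
Proof.
set s := (\sum_(i in A) a i)%N.
transitivity (\sum_(i in A) \sum_(j in A) \sum_(k in A) (a i * a j * a k * s))%N.
  apply: eq_bigr => i _; apply: eq_bigr => j _; apply: eq_bigr => k _.
  by rewrite big_distrr.
transitivity (\sum_(i in A) \sum_(j in A) (a i * a j * s * s))%N.
  apply: eq_bigr => i _; apply: eq_bigr => j _.
  by rewrite -big_distrl -big_distrr.
transitivity (\sum_(i in A) (a i * s * s * s))%N.
  apply: eq_bigr => i _.
  by rewrite -!big_distrl -big_distrr.
by rewrite -!big_distrl /= -/s !expnS expn0 muln1 !mulnA.
Qed.

Section Count.
Variables (m : nat) (S : {set vec m}).

Lemma count_valid :
  (\sum_(S1 in orbitS S) \sum_(S2 in orbitS S) \sum_(S3 in orbitS S)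
     \sum_(S4 in orbitS S) valid S1 S2 S3 S4
   <= 2 ^ (2 * dimS S * m + 8 * dimS S ^ 2))%N.
Proof.
set d := dimS S; set O := orbitS S.
pose sub (f : {ffun 'I_(2 * d) -> vec m}) (S' : {set vec m}) : nat :=
  (<<enum S'>> <= <<codom f>>)%VS.
apply: (@leq_trans (\sum_(S1 in O) \sum_(S2 in O) \sum_(S3 in O) \sum_(S4 in O)
   \sum_f sub f S1 * sub f S2 * sub f S3 * sub f S4)%N).
  apply: leq_sum => S1 H1; apply: leq_sum => S2 H2.
  apply: leq_sum => S3 H3; apply: leq_sum => S4 H4.
  case hv: (valid S1 S2 S3 S4) => //.
  have [f [a1 a2 a3 a4]] := span_claim (orbit_dim H1) (orbit_dim H2)
     (orbit_dim H3) (orbit_dim H4) hv.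
  by rewrite (bigD1 f) //= /sub a1 a2 a3 a4 !muln1 leq_addr.
have -> : (\sum_(S1 in O) \sum_(S2 in O) \sum_(S3 in O) \sum_(S4 in O)
   \sum_f sub f S1 * sub f S2 * sub f S3 * sub f S4 =
   \sum_f \sum_(S1 in O) \sum_(S2 in O) \sum_(S3 in O) \sum_(S4 in O)
   sub f S1 * sub f S2 * sub f S3 * sub f S4)%N.
  transitivity (\sum_(S1 in O) \sum_(S2 in O) \sum_(S3 in O) \sum_f \sum_(S4 in O)
     sub f S1 * sub f S2 * sub f S3 * sub f S4)%N.
    apply: eq_bigr => S1 _; apply: eq_bigr => S2 _; apply: eq_bigr => S3 _.
    exact: exchange_big.
  transitivity (\sum_(S1 in O) \sum_(S2 in O) \sum_f \sum_(S3 in O) \sum_(S4 in O)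
     sub f S1 * sub f S2 * sub f S3 * sub f S4)%N.
    apply: eq_bigr => S1 _; apply: eq_bigr => S2 _.
    exact: exchange_big.
  transitivity (\sum_(S1 in O) \sum_f \sum_(S2 in O) \sum_(S3 in O) \sum_(S4 in O)
     sub f S1 * sub f S2 * sub f S3 * sub f S4)%N.
    apply: eq_bigr => S1 _.
    exact: exchange_big.
  exact: exchange_big.
apply: (@leq_trans (\sum_(f : {ffun 'I_(2 * d) -> vec m}) (2 ^ (2 * d * d)) ^ 4)%N).
  apply: leq_sum => f _; rewrite (sum4 (mem O) (sub f)) leq_exp2r //.
  have -> : (\sum_(S' in O) sub f S' = #|[set S' in O | (<<enum S'>> <= <<codom f>>)%VS]|)%N.
    rewrite -sum1_card big_mkcond [RHS]big_mkcond; apply: eq_bigr => S' _.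
    by rewrite inE /sub; case: (S' \in O); case: (<<enum S'>> <= <<codom f>>)%VS.
  exact: count_W.
rewrite big_const iter_addn_0 card_ffun card_vec card_ord -!expnM -expnD.
rewrite leq_exp2l // -mulnn; lia.
Qed.
End Count.

Lemma bexp_ext (R : rcfType) m (eps : R) (g h : config m -> R) :
  (forall z, g z = h z) -> bexp eps g = bexp eps h.
Proof. by move=> H; apply: eq_bigr => z _; rewrite H. Qed.

Lemma bexp_sum (R : rcfType) m (eps : R) (I : finType) (A : pred I)
   (F : I -> config m -> R) :
  bexp eps (fun z => \sum_(i in A) F i z) = \sum_(i in A) bexp eps (F i).
Proof.
rewrite /bexp; under eq_bigr do rewrite mulr_sumr.
exact: exchange_big.
Qed.

Lemma expand4 (R : rcfType) m (eps : R) (S : {set vec m}) z :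
  chiSbar eps S z ^+ 4 =
  \sum_(S1 in orbitS S) \sum_(S2 in orbitS S) \sum_(S3 in orbitS S)
   \sum_(S4 in orbitS S)
     (chiS eps S1 z * chiS eps S2 z * chiS eps S3 z * chiS eps S4 z).
Proof.
rewrite /chiSbar !exprS expr0 mulr1 mulr_suml; apply: eq_bigr => S1 _.
rewrite mulr_suml mulr_sumr; apply: eq_bigr => S2 _.
rewrite mulr_suml !mulr_sumr; apply: eq_bigr => S3 _.
rewrite !mulr_sumr; apply: eq_bigr => S4 _.
by rewrite !mulrA.
Qed.

Unset Implicit Arguments.
Set Strict Implicit.

Theorem lemma5 (R : rcfType) (m : nat) (S : {set 'rV['F_2]_m}) (eps : R) :
  (0 < m)%N -> 0 < eps -> eps < 1 / 2 ->
  bexp eps (fun z => chiSbar eps S z ^+ 4)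
    <= 2 ^+ (2 * dimS S * m + 8 * dimS S ^ 2)%N
       * (1 / (eps * (1 - eps))) ^+ (2 ^ dimS S)%N.
Proof.
move=> _ e0 e2.
have e1 : eps < 1 by apply: lt_trans e2 _; rewrite ltr_pdivrMr // mul1r ltr1n.
rewrite (@bexp_ext R m eps _ (fun z => \sum_(S1 in orbitS S) \sum_(S2 in orbitS S)
   \sum_(S3 in orbitS S) \sum_(S4 in orbitS S)
     (chiS eps S1 z * chiS eps S2 z * chiS eps S3 z * chiS eps S4 z)));
  last by move=> z; rewrite expand4.
rewrite bexp_sum.
under eq_bigr => S1 _ do rewrite bexp_sum.
under eq_bigr => S1 _ do under eq_bigr => S2 _ do rewrite bexp_sum.
under eq_bigr => S1 _ do under eq_bigr => S2 _ do under eq_bigr => S3 _ do rewrite bexp_sum.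
set K := (1 / (eps * (1 - eps))) ^+ (2 ^ dimS S)%N.
have K0 : 0 <= K.
  by rewrite exprn_ge0 // divr_ge0 // mulr_ge0 // ?subr_ge0 ltW.
have cS : forall S', S' \in orbitS S -> (#|S'| <= 2 ^ dimS S)%N.
  move=> S' /orbit_rep [g [_ _ h]]; exact: leq_trans h (card_S S).
apply: (@le_trans _ _ (\sum_(S1 in orbitS S) \sum_(S2 in orbitS S)
   \sum_(S3 in orbitS S) \sum_(S4 in orbitS S) (valid S1 S2 S3 S4)%:R * K)).
  apply: ler_sum => S1 H1; apply: ler_sum => S2 H2.
  apply: ler_sum => S3 H3; apply: ler_sum => S4 H4.
  apply: term_bound => //.
  have := cS _ H1; have := cS _ H2; have := cS _ H3; have := cS _ H4; lia.
under eq_bigr => S1 _ do under eq_bigr => S2 _ do under eq_bigr => S3 _ do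
  rewrite -mulr_suml -natr_sum.
under eq_bigr => S1 _ do under eq_bigr => S2 _ do rewrite -mulr_suml -natr_sum.
under eq_bigr => S1 _ do rewrite -mulr_suml -natr_sum.
rewrite -mulr_suml -natr_sum -natrX ler_wpM2r // ler_nat.
exact: count_valid.
Qed.
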